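(* Let $p$ be a program. Then $p$ is in $\to_{\mathrm{ond}}$-normal form (there is no $q$ with $p\to_{\mathrm{ond}} q$) if and only if $\mathrm{onorm}(p)$.
   Context: Syntax (split presentation). Terms: $t,u,s ::= x \mid \lambda x.t \mid t\,u$. Values: $v ::= \lambda x.t$ (variables are not values). Environments: $E ::= \epsilon \mid E[x\leftarrow t]$. Programs: $p ::= (t,E)$. In $E[x\leftarrow t]$ and $(u,E[x\leftarrow t])$ the variable $x$ is bound in $E$ and $u$; everything is up to $\alpha$-renaming, appended ES bind fresh variables. Appending: $(t,E)@[x\leftarrow u] := (t,E[x\leftarrow u])$. Inert terms and fireballs: $i ::= x \mid i\,f$, $f ::= v \mid i$. Open term evaluation contexts: $\mathcal{H} ::= \langle\cdot\rangle \mid \mathcal{H}\,t \mid i\,\mathcal{H}$. Term contexts: $C ::= \langle\cdot\rangle \mid C\,t \mid t\,C$. Environment contexts: $G ::= E[x\leftarrow C] \mid G[x\leftarrow u]$. Program contexts: $P ::= (C,E) \mid (t,G)$, with $(C,E)@[x\leftarrow u] := (C,E[x\leftarrow u])$, $(t,G)@[x\leftarrow u] := (t,G[x\leftarrow u])$. Plugging: $(C,E)\langle (t,E')\rangle := (C\langle t\rangle, E'E)$; $(u,E[x\leftarrow C])\langle (t,E')\rangle := (u, E[x\leftarrow C\langle t\rangle]E')$; $(u,G[x\leftarrow s])\langle (t,E)\rangle := ((u,G)\langle(t,E)\rangle)@[x\leftarrow s]$; $P\langle t\rangle := P\langle (t,\epsilon)\rangle$. For $p=(t,E)$, $p@[x\leftarrow\mathcal{H}]$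 denotes the program context $(t,E[x\leftarrow\mathcal{H}])$. Look-up $P(x)$: $P(x)=t$ if the list of ES of $P$ contains $[x\leftarrow t]$ with $t$ a term, $\bot$ otherwise. $v^{\alpha}$ is a copy of $v$ with fresh bound variables. Needed variables: $nv(x)=\{x\}$, $nv(\lambda x.t)=\emptyset$, $nv(t\,u)=nv(t)\cup nv(u)$; $nv((t,\epsilon))=nv(t)$, $nv((t,E[x\leftarrow u]))=nv((t,E))$ if $x\notin nv((t,E))$, else $(nv((t,E))\setminus\{x\})\cup nv(u)$; $nv(\langle\cdot\rangle)=\emptyset$, $nv(\mathcal{H}\,t)=nv(\mathcal{H})$, $nv(i\,\mathcal{H})=nv(i)\cup nv(\mathcal{H})$. Open evaluation contexts $P\in\mathcal{E}_{{\mathcal{V}}}$, inductively: $(\mathcal{H},\epsilon)\in\mathcal{E}_{nv(\mathcal{H})}$; if $P\in\mathcal{E}_{{\mathcal{V}}}$, $x\in{\mathcal{V}}$, $i$ inert then $P@[x\leftarrow i]\in\mathcal{E}_{({\mathcal{V}}\setminus\{x\})\cup nv(i)}$; if $P\in\mathcal{E}_{{\mathcal{V}}}$, $x\notin{\mathcal{V}}$ then $P@[x\leftarrow t]\in\mathcal{E}_{{\mathcal{V}}}$; if $P\in\mathcal{E}_{{\mathcal{V}}}$, $x\notin{\mathcal{V}}$ then $P\langle x\rangle@[x\leftarrow\mathcal{H}]\in\mathcal{E}_{{\mathcal{V}}\cup nv(\mathcal{H})}$ ($x$ not in the domain of $P$). Open CbNeed rules, for $P\in\mathcal{E}_{{\mathcal{V}}}$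 for some ${\mathcal{V}}$: $P\langle(\lambda x.t)u\rangle \to_{\mathrm{om}} P\langle (t,[x\leftarrow u])\rangle$; $P\langle x\rangle\to_{\mathrm{oe}} P\langle v^{\alpha}\rangle$ if $P(x)=v$; $\to_{\mathrm{ond}} := \to_{\mathrm{om}}\cup\to_{\mathrm{oe}}$. Predicates on programs, inductively: $\mathrm{inert}((i,\epsilon))$ for $i$ inert; if $\mathrm{inert}(p)$ and $x\in nv(p)$ then $\mathrm{inert}(p@[x\leftarrow i])$ for $i$ inert; if $\mathrm{inert}(p)$ and $x\notin nv(p)$ then $\mathrm{inert}(p@[x\leftarrow t])$ for any $t$. $\mathrm{abs}((v,\epsilon))$ for $v$ a value; if $\mathrm{abs}(p)$ then $\mathrm{abs}(p@[x\leftarrow t])$ for any $t$. $\mathrm{onorm}(p)$ iff $\mathrm{inert}(p)$ or $\mathrm{abs}(p)$. *)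

(* Defs.v *)
From mathcomp Require Import all_boot.
Set Implicit Arguments.
Unset Strict Implicit.
Unset Printing Implicit Defensive.

Inductive term : Type :=
| Var : nat -> term
| Lam : nat -> term -> term
| App : term -> term -> term.

Definition is_value (t : term) : Prop := exists x b, t = Lam x b.

(* Environments.  Storage convention: the HEAD of the list is the OUTERMOST
   explicit substitution, i.e.  E[x<-t]  is  (x,t) :: E.                    *)
Definition env := list (nat * term).
Definition program := (term * env)%type.

Definition papp (p : program) (x : nat) (u : term) : program :=
  (p.1, (x, u) :: p.2).

Inductive inert : term -> Prop :=
| inert_var x : inert (Var x)
| inert_app i f : inert i -> fireball f -> inert (App i f)
with fireball : term -> Prop :=
| fb_val x t : fireball (Lam x t)
| fb_inert i : inert i -> fireball i.

Inductive hctx : Type :=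
| HHole : hctx
| HAppL : hctx -> term -> hctx
| HAppR : term -> hctx -> hctx.

Fixpoint hctx_ok (H : hctx) : Prop :=
  match H with
  | HHole => True
  | HAppL H _ => hctx_ok H
  | HAppR i H => inert i /\ hctx_ok H
  end.

Fixpoint hplug (H : hctx) (t : term) : term :=
  match H with
  | HHole => t
  | HAppL H u => App (hplug H t) u
  | HAppR i H => App i (hplug H t)
  end.

Fixpoint nv (t : term) : pred nat :=
  match t with
  | Var x => fun y => y == x
  | Lam _ _ => fun _ => false
  | App t u => fun y => nv t y || nv u y
  end.

Fixpoint nvp_env (t : term) (E : env) : pred nat :=
  match E with
  | [::] => nv t
  | (x, u) :: E' =>
      let V := nvp_env t E' in
      if V x then (fun y => ((y != x) && V y) || nv u y) else V
  end.

Definition nvp (p : program) : pred nat := nvp_env p.1 p.2.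

Fixpoint nvh (H : hctx) : pred nat :=
  match H with
  | HHole => fun _ => false
  | HAppL H _ => nvh H
  | HAppR i H => fun y => nv i y || nvh H y
  end.

(* Program contexts whose holes are in evaluation position (these are the
   only ones that occur in the open evaluation contexts E_V):
     PTm H E            represents  (H, E)
     PES u Ein y H Eout represents  (u, Ein [y <- H] Eout)
   (Eout stored outermost-first, as for environments). *)
Inductive pctx : Type :=
| PTm : hctx -> env -> pctx
| PES : term -> env -> nat -> hctx -> env -> pctx.

Definition pctx_app (P : pctx) (x : nat) (u : term) : pctx :=
  match P with
  | PTm H E => PTm H ((x, u) :: E)
  | PES t Ein y H Eout => PES t Ein y H ((x, u) :: Eout)
  end.

(* plugging  P<(t,E')>:
   (C,E)<(t,E')> = (C<t>, E'E);  (u,E[y<-C]E'')<(t,E')> = (u, E[y<-C<t>]E'E'') *)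
Definition plug (P : pctx) (q : program) : program :=
  match P with
  | PTm H E => (hplug H q.1, E ++ q.2)
  | PES u Ein y H Eout => (u, Eout ++ q.2 ++ (y, hplug H q.1) :: Ein)
  end.

Definition plugt (P : pctx) (t : term) : program := plug P (t, [::]).

(* look-up in an environment: the innermost (= last stored) binding of x *)
Fixpoint env_lookup (x : nat) (E : env) : option term :=
  match E with
  | [::] => None
  | (y, t) :: E' =>
      match env_lookup x E' with
      | Some t' => Some t'
      | None => if y == x then Some t else None
      end
  end.

(* P(x): look-up among the ES of P (with a term, not a context) whose scope
   contains the hole. *)
Definition plookup (P : pctx) (x : nat) : option term :=
  match P with
  | PTm _ E => env_lookup x E
  | PES _ _ _ _ Eout => env_lookup x Eout
  end.

Definition pdom (P : pctx) : seq nat :=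
  match P with
  | PTm _ E => map fst E
  | PES _ _ _ _ Eout => map fst Eout
  end.

Inductive evctx : pctx -> pred nat -> Prop :=
| ev_base H : hctx_ok H -> evctx (PTm H [::]) (nvh H)
| ev_inert P V x i :
    evctx P V -> V x -> inert i ->
    evctx (pctx_app P x i) (fun y => ((y != x) && V y) || nv i y)
| ev_skip P V x t :
    evctx P V -> ~~ V x -> evctx (pctx_app P x t) V
| ev_hole P V x H :
    evctx P V -> ~~ V x -> hctx_ok H -> x \notin pdom P ->
    evctx (PES (plugt P (Var x)).1 (plugt P (Var x)).2 x H [::])
          (fun y => V y || nvh H y).

Inductive om : program -> program -> Prop :=
| om_step P V x t u :
    evctx P V ->
    om (plugt P (App (Lam x t) u)) (plug P (t, [:: (x, u)])).

Inductive oe : program -> program -> Prop :=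
| oe_step P V x v :
    evctx P V -> plookup P x = Some v -> is_value v ->
    oe (plugt P (Var x)) (plugt P v).

Definition ond (p q : program) : Prop := om p q \/ oe p q.

Inductive inertp : program -> Prop :=
| ip_base i : inert i -> inertp (i, [::])
| ip_inert p x i : inertp p -> nvp p x -> inert i -> inertp (papp p x i)
| ip_skip p x t : inertp p -> ~~ nvp p x -> inertp (papp p x t).

Inductive absp : program -> Prop :=
| ab_base v : is_value v -> absp (v, [::])
| ab_ext p x t : absp p -> absp (papp p x t).

Definition onorm (p : program) : Prop := inertp p \/ absp p.

(* Main.v *)
Require Import Defs.
From mathcomp Require Import all_boot.
From Stdlib Require Import Classical.

Lemma plugt_app P x u r : plugt (pctx_app P x u) r = papp (plugt P r) x u.
Proof. by case: P. Qed.

Lemma plugt_hole (p : program) x H r :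
  plugt (PES p.1 p.2 x H [::]) r = papp p x (hplug H r).
Proof. by []. Qed.

Lemma pdom_app P x u : pdom (pctx_app P x u) = x :: pdom P.
Proof. by case: P. Qed.

Lemma plookup_app P x u y : plookup (pctx_app P x u) y =
  match plookup P y with Some t => Some t | None => if x == y then Some u else None end.
Proof. by case: P. Qed.

Lemma env_lookup_none y E : (env_lookup y E = None) <-> (y \notin map fst E).
Proof.
elim: E => [|[x t] E IH] //=. rewrite in_cons negb_or.
case E1: (env_lookup y E) IH => [t'|] IH.
- split; first by []. move=> /andP [_ H]. exact: (proj2 IH H).
- rewrite (proj1 IH erefl) andbT. by case: (eqVneq x y).
Qed.

Lemma plookup_none P y : plookup P y = None <-> y \notin pdom P.
Proof. case: P => * /=; exact: env_lookup_none. Qed.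

Lemma nvp_papp p x u z : nvp (papp p x u) z =
  if nvp p x then ((z != x) && nvp p z) || nv u z else nvp p z.
Proof. rewrite /nvp /=. by case: (nvp_env _ _ x). Qed.

Lemma nv_hplug H r z : nv r z -> nv (hplug H r) z.
Proof. elim: H => [|H IH t|i H IH] //= Hr; by rewrite ?IH ?orbT. Qed.

Lemma redex_or_fb t : fireball t \/
  exists H a b c, hctx_ok H /\ t = hplug H (App (Lam a b) c).
Proof.
elim: t => [x|x b _|t1 IH1 t2 IH2].
- left; constructor; constructor.
- left; constructor.
- case: IH1 => [F1|[H [a [b [c [HH ->]]]]]].
  + destruct F1 as [a b|i Hi].
    * right; by exists HHole, a, b, t2.
    * case: IH2 => [F2|[H [a [b [c [HH ->]]]]]].
      -- left; apply fb_inert; by constructor.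
      -- right; by exists (HAppR i H), a, b, c.
  + right; by exists (HAppL H t2), a, b, c.
Qed.

Lemma reach_inert i : inert i -> forall S : nat -> Prop, (exists y, S y /\ nv i y) ->
 exists y H, S y /\ nv i y /\ hctx_ok H /\ hplug H (Var y) = i /\
   (forall z, S z -> ~~ nvh H z) /\ (forall z, nvh H z -> nv i z).
Proof.
elim: i => [x|x b _|i1 IH1 i2 IH2] Hi S [y [Sy Ny]].
- move: Ny => /= /eqP Ny; subst y. exists x, HHole => /=. by rewrite eqxx.
- inversion Hi.
- have [Hi1 Hf] : inert i1 /\ fireball i2 by inversion Hi.
  case: (classic (exists w, S w /\ nv i1 w)) => [HE|HE].
  + have [y' [H [Sy' [Ny' [Hok [Hpl [D Sub]]]]]]] := IH1 Hi1 S HE.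
    exists y', (HAppL H i2) => /=. rewrite Ny' Hpl. do 5 split => //.
    by move=> z /Sub ->.
  + have Ny2 : nv i2 y.
      move: Ny => /= /orP [N1|//]. by case: HE; exists y.
    destruct Hf as [a b|i2 Hi2]; first by [].
    have [y' [H [Sy' [Ny' [Hok [Hpl [D Sub]]]]]]] := IH2 Hi2 S (ex_intro _ y (conj Sy Ny2)).
    exists y', (HAppR i1 H) => /=. rewrite Ny' Hpl orbT. do 5 split => //.
    * move=> z Sz. rewrite negb_or D // andbT. apply/negP => Nz; apply: HE; by exists z.
    * move=> z /orP [->//|/Sub ->]; by rewrite orbT.
Qed.

Lemma reach_hctx H : hctx_ok H -> forall r (S : nat -> Prop), (exists y, S y /\ nvh H y) ->
  exists y H', S y /\ nvh H y /\ hctx_ok H' /\ hplug H' (Var y) = hplug H r /\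
   (forall z, S z -> ~~ nvh H' z) /\ (forall z, nvh H' z -> nvh H z).
Proof.
elim: H => [|H IH t|i H IH] /= Hok r S [y [Sy Ny]] //.
- have [y' [H' [Sy' [Ny' [Hok' [Hpl [D Sub]]]]]]] := IH Hok r S (ex_intro _ y (conj Sy Ny)).
  exists y', (HAppL H' t) => /=. by rewrite Hpl.
- case: Hok => Hi Hok.
  case: (classic (exists w, S w /\ nv i w)) => [HE|HE].
  + have [y' [H' [Sy' [Ny' [Hok' [Hpl [D Sub]]]]]]] := @reach_inert _ Hi _ HE.
    exists y', (HAppL H' (hplug H r)) => /=. rewrite Hpl Ny'. do 5 split => //.
    by move=> z /Sub ->.
  + have Ny2 : nvh H y.
      move: Ny => /orP [N1|//]. by case: HE; exists y.
    have [y' [H' [Sy' [Ny' [Hok' [Hpl [D Sub]]]]]]] := IH Hok r S (ex_intro _ y (conj Sy Ny2)).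
    exists y', (HAppR i H') => /=. rewrite Hpl Ny' orbT. do 5 split => //.
    * move=> z Sz. rewrite negb_or D // andbT. apply/negP => Nz; apply: HE; by exists z.
    * move=> z /orP [->//|/Sub ->]; by rewrite orbT.
Qed.

Lemma hctx_fb H r : hctx_ok H -> fireball (hplug H r) -> fireball r.
Proof.
elim: H => [|H IH t|i H IH] //= Hok Hf.
- inversion Hf as [|i' Hi]. inversion Hi. apply: IH => //. by apply fb_inert.
- inversion Hf as [|i' Hi]. inversion Hi. apply: IH => //. by case: Hok.
Qed.

Definition RP (N : pred nat) (p : program) : Prop :=
 forall S : nat -> Prop, (exists y, S y /\ N y) ->
 exists y Q W, S y /\ N y /\ evctx Q W /\ (forall z, S z -> ~~ W z) /\
   y \notin pdom Q /\ plugt Q (Var y) = p /\ (forall z, W z -> N z).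

Lemma RP_ext (N N' : pred nat) p : N =1 N' -> RP N p -> RP N' p.
Proof.
move=> E HR S [y0 [Sy0 Ny0]].
have [y [Q [W [Sy [Ny [HQ [D [Pd [Pl Sub]]]]]]]]] :=
  HR S (ex_intro _ y0 (conj Sy0 (etrans (E y0) Ny0))).
exists y, Q, W. rewrite -E. do 6 split => //. by move=> z /Sub; rewrite E.
Qed.

Lemma RP_inert N p x i : RP N p -> N x -> inert i ->
  RP (fun z => ((z != x) && N z) || nv i z) (papp p x i).
Proof.
move=> HR Nx Hi S [y0 [Sy0 Ny0]].
pose Ei := exists w, S w /\ nv i w.
pose S1 := fun z => (z <> x /\ S z) \/ (z = x /\ Ei).
have HS1 : exists y, S1 y /\ N y.
  case: (classic Ei) => HE.
  - exists x; split => //; right; by split.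
  - exists y0. move: Ny0 => /orP [/andP [nx Ny]|Ni].
    + split => //; left; split => //; exact/eqP.
    + exfalso; apply HE; by exists y0.
have [y [Q [W [S1y [Ny [HQ [D [Pd [Pl Sub]]]]]]]]] := HR S1 HS1.
case: S1y => [[ynx Sy]|[yx HE]].
- have ynx' : (y == x) = false by apply/eqP.
  case Wx: (W x).
  + exists y, (pctx_app Q x i), (fun z => ((z != x) && W z) || nv i z).
    split => //. split; first by rewrite ynx' Ny.
    split; first by apply: ev_inert.
    split.
      move=> z Sz; apply/negP => /orP [/andP [zx Wz]|Niz].
      * have : ~~ W z by apply D; left; split => //; exact/eqP.
        by rewrite Wz.
      * have : ~~ W x by apply D; right; split => //; exists z.
        by rewrite Wx.
    split; first by rewrite pdom_app in_cons ynx'.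
    split; first by rewrite plugt_app Pl.
    move=> z /orP [/andP [zx Wz]|->]; last by rewrite orbT.
    by rewrite zx Sub.
  + exists y, (pctx_app Q x i), W.
    split => //. split; first by rewrite ynx' Ny.
    split; first by apply: ev_skip => //; rewrite Wx.
    split.
      move=> z Sz. case: (eqVneq z x) => [->|zx]; first by rewrite Wx.
      apply D; left; split => //; exact/eqP.
    split; first by rewrite pdom_app in_cons ynx'.
    split; first by rewrite plugt_app Pl.
    move=> z Wz. case: (eqVneq z x) => [zx|zx]; first by rewrite zx Wx in Wz.
    by rewrite /= Sub.
- subst y. case: HE => w [Sw Niw].
  have Wx : ~~ W x by apply D; right; split => //; exists w.
  have [y' [H [Sy' [Niy' [Hok [Hpl [DH SubH]]]]]]] :=
    @reach_inert _ Hi S (ex_intro _ w (conj Sw Niw)).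
  exists y', (PES (plugt Q (Var x)).1 (plugt Q (Var x)).2 x H [::]),
    (fun z => W z || nvh H z).
  split => //. split; first by rewrite Niy' orbT.
  split; first by apply: ev_hole.
  split.
    move=> z Sz. rewrite negb_or DH // andbT.
    case: (eqVneq z x) => [->//|zx]. apply D; left; split => //; exact/eqP.
  split; first by [].
  split; first by rewrite plugt_hole Hpl Pl.
  move=> z /orP [Wz|Hz]; last by rewrite SubH ?orbT.
  case: (eqVneq z x) => [zx|zx]; first by rewrite zx (negbTE Wx) in Wz.
  by rewrite /= Sub.
Qed.

Lemma RP_skip N p x t : RP N p -> ~~ N x -> RP N (papp p x t).
Proof.
move=> HR Nx S Hex.
have [y [Q [W [Sy [Ny [HQ [D [Pd [Pl Sub]]]]]]]]] := HR S Hex.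
exists y, (pctx_app Q x t), W. do 2 split => //.
split. apply: ev_skip => //. apply/negP => /Sub; by rewrite (negbTE Nx).
split => //. split.
  rewrite pdom_app in_cons negb_or Pd andbT. apply/eqP => yx. by rewrite -yx Ny in Nx.
by rewrite plugt_app Pl.
Qed.

Lemma RP_inertp p : inertp p -> RP (nvp p) p.
Proof.
elim => [i Hi|q x i Hq IH Nx Hi|q x t Hq IH Nx].
- move=> S [y [Sy Ny]].
  have [y' [H [Sy' [Niy' [Hok [Hpl [DH SubH]]]]]]] :=
    @reach_inert _ Hi S (ex_intro _ y (conj Sy Ny)).
  exists y', (PTm H [::]), (nvh H). do 2 split => //.
  split; first by apply: ev_base.
  split => //. split => //. by rewrite /plugt /= Hpl.
- apply: (@RP_ext _ _ _ _ (@RP_inert _ _ _ _ IH Nx Hi)). move=> z; by rewrite nvp_papp Nx.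
- apply: (@RP_ext _ _ _ _ (@RP_skip _ _ _ t IH Nx)). move=> z; by rewrite nvp_papp (negbTE Nx).
Qed.

Lemma RP_ctx P0 V0 : evctx P0 V0 -> forall r, RP V0 (plugt P0 r).
Proof.
elim => [H Hok|P V x i HP IH Vx Hi|P V x t HP IH Vx|P V x H HP IH Vx Hok Pd] r.
- move=> S Hex.
  have [y' [H' [Sy' [Niy' [Hok' [Hpl [DH SubH]]]]]]] := @reach_hctx _ Hok r _ Hex.
  exists y', (PTm H' [::]), (nvh H'). do 2 split => //.
  split; first by apply: ev_base.
  split => //. split => //. by rewrite /plugt /= Hpl.
- rewrite plugt_app; exact: RP_inert.
- rewrite plugt_app; exact: RP_skip.
- rewrite plugt_hole. move=> S [y0 [Sy0 Ny0]].
  case: (classic (exists w, S w /\ V w)) => [HV|HV].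
  + have [y [Q [W [Sy [Ny [HQ [D [Pdy [Pl Sub]]]]]]]]] := IH (Var x) S HV.
    exists y, (pctx_app Q x (hplug H r)), W.
    split => //. split; first by rewrite Ny.
    split. apply: ev_skip => //. apply/negP => /Sub; by rewrite (negbTE Vx).
    split => //. split.
      rewrite pdom_app in_cons negb_or Pdy andbT. apply/eqP => yx. by rewrite -yx Ny in Vx.
    split; first by rewrite plugt_app Pl.
    by move=> z /Sub ->.
  + have Ny2 : nvh H y0.
      move: Ny0 => /orP [N1|//]. by case: HV; exists y0.
    have [y' [H' [Sy' [Niy' [Hok' [Hpl [DH SubH]]]]]]] :=
      @reach_hctx _ Hok r _ (ex_intro _ y0 (conj Sy0 Ny2)).
    exists y', (PES (plugt P (Var x)).1 (plugt P (Var x)).2 x H' [::]),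
      (fun z => V z || nvh H' z).
    split => //. split; first by rewrite Niy' orbT.
    split; first by apply: ev_hole.
    split.
      move=> z Sz. rewrite negb_or DH // andbT. apply/negP => Vz; apply HV; by exists z.
    split; first by [].
    split; first by rewrite plugt_hole Hpl.
    move=> z /orP [->//|/SubH ->]; by rewrite orbT.
Qed.

Lemma nvp_plug P0 V0 : evctx P0 V0 -> forall r z, nv r z -> z \notin pdom P0 ->
  nvp (plugt P0 r) z.
Proof.
elim => [H Hok|P V x i HP IH Vx Hi|P V x t HP IH Vx|P V x H HP IH Vx Hok Pd] r z Nr Pz.
- rewrite /nvp /=. exact: nv_hplug.
- move: Pz; rewrite pdom_app in_cons negb_or => /andP [zx Pz].
  rewrite plugt_app nvp_papp (IH r z Nr Pz) zx. by case: ifP.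
- move: Pz; rewrite pdom_app in_cons negb_or => /andP [zx Pz].
  rewrite plugt_app nvp_papp (IH r z Nr Pz) zx. by case: ifP.
- have Hx : nvp (plugt P (Var x)) x by apply: IH => //=; rewrite eqxx.
  by rewrite plugt_hole nvp_papp Hx (@nv_hplug H _ _ Nr) orbT.
Qed.

Lemma inertp_nil t : inertp (t, [::]) -> inert t.
Proof.
move=> Hp.
have : forall q, inertp q -> q.2 = [::] -> inert q.1.
  move=> q; case => [i Hi|p0 x0 i _ _ _|p0 x0 t0 _ _] //=.
by move/(_ _ Hp erefl).
Qed.

Lemma inertp_cons p x u : inertp (papp p x u) -> inertp p /\ (nvp p x -> inert u).
Proof.
move=> Hp.
have : forall q, inertp q -> forall t x u E, q = (t, (x,u)::E) ->
   inertp (t,E) /\ (nvp (t,E) x -> inert u).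
  move=> q; case => [i Hi|p0 x0 i Hp0 Nx Hi|p0 x0 t0 Hp0 Nx] t1 x1 u1 E1 //;
  case: p0 Hp0 Nx => [t2 E2] Hp0 Nx /= [<- <- <- <-]; split => //.
  move=> N; by rewrite N in Nx.
case: p Hp => [t E] Hp. by move/(_ _ Hp t x u E erefl).
Qed.

Lemma inert_ctx P0 V0 : evctx P0 V0 -> forall r, inertp (plugt P0 r) ->
  fireball r /\ (forall y v, r = Var y -> plookup P0 y = Some v -> inert v).
Proof.
elim => [H Hok|P V x i HP IH Vx Hi|P V x t HP IH Vx|P V x H HP IH Vx Hok Pd] r.
- move=> /inertp_nil Hin. split; first exact: (@hctx_fb _ _ Hok (fb_inert Hin)).
  by [].
- rewrite plugt_app => /inertp_cons [Hp Hu]. have [Fr Hl] := IH r Hp.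
  split => // y v ry. rewrite plookup_app. case E1: (plookup P y) => [t'|].
  + move=> [<-]; exact: Hl E1.
  + case: eqP => // _ [<-]. done.
- rewrite plugt_app => /inertp_cons [Hp Hu]. have [Fr Hl] := IH r Hp.
  split => // y v ry. rewrite plookup_app. case E1: (plookup P y) => [t'|].
  + move=> [<-]; exact: Hl E1.
  + case: eqP => // xy [<-]. subst r y. apply: Hu.
    apply: (@nvp_plug _ _ HP) => /=; first by rewrite eqxx.
    exact/plookup_none.
- rewrite plugt_hole => /inertp_cons [Hp Hu].
  have Nx : nvp (plugt P (Var x)) x by apply: (@nvp_plug _ _ HP) => //=; rewrite eqxx.
  split; first exact: (@hctx_fb _ _ Hok (fb_inert (Hu Nx))).
  by [].
Qed.

Lemma ctx_notlam P0 V0 : evctx P0 V0 -> forall r, (forall a b, r <> Lam a b) ->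
  forall a b, (plugt P0 r).1 <> Lam a b.
Proof.
elim => [H Hok|P V x i HP IH _ _|P V x t HP IH _|P V x H HP IH _ _ _] r Hr a b.
- case: H Hok => [|H t|i H] //= _.
- rewrite plugt_app /=. exact: IH.
- rewrite plugt_app /=. exact: IH.
- rewrite plugt_hole /=. exact: IH.
Qed.

Lemma absp_lam p : absp p -> exists a b, p.1 = Lam a b.
Proof. elim => [v [a [b ->]]|q x t _ IH] //; by exists a, b. Qed.

Lemma fb_redex a b c : ~ fireball (App (Lam a b) c).
Proof. move=> F. inversion F as [|i Hi]. inversion Hi as [|i' f Hi' Hf]. inversion Hi'. Qed.

Lemma step_up Q W x u : evctx Q W -> ~~ W x -> x \notin pdom Q -> ~ inert u ->
  exists q, ond (papp (plugt Q (Var x)) x u) q.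
Proof.
move=> HQ Wx Pd Hu.
case: (redex_or_fb u) => [F|[H [a [b [c [Hok ->]]]]]].
- destruct F as [a b|i Hi]; last by [].
  exists (plugt (pctx_app Q x (Lam a b)) (Lam a b)). right. rewrite -plugt_app.
  apply: (@oe_step _ W) => //.
  + exact: ev_skip.
  + by rewrite plookup_app (proj2 (plookup_none Q x) Pd) eqxx.
  + by exists a, b.
- exists (plug (PES (plugt Q (Var x)).1 (plugt Q (Var x)).2 x H [::]) (b, [:: (a, c)])).
  left. have E0 := plugt_hole (plugt Q (Var x)) x H (App (Lam a b) c). rewrite -E0. exact: (om_step a b c (ev_hole HQ Wx Hok Pd)).
Qed.

Lemma step p x u : (exists q, ond p q) \/ onorm p ->
  (exists q, ond (papp p x u) q) \/ onorm (papp p x u).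
Proof.
case => [[q [Hom|Hoe]]|[Hi|Ha]].
- destruct Hom as [P V y t s HP].
  case: (boolP (V x)) => Vx; first case: (classic (inert u)) => Hu.
  + left; exists (plug (pctx_app P x u) (t, [:: (y, s)])). left.
    rewrite -plugt_app. exact: (om_step y t s (ev_inert HP Vx Hu)).
  + left.
    have [y' [Q [W [Sy [Ny [HQ [D [Pd [Pl _]]]]]]]]] :=
      @RP_ctx _ _ HP (App (Lam y t) s) (fun z => z = x) (ex_intro _ x (conj erefl Vx)).
    subst y'. rewrite -Pl. exact: step_up HQ (D x erefl) Pd Hu.
  + left; exists (plug (pctx_app P x u) (t, [:: (y, s)])). left.
    rewrite -plugt_app. exact: (om_step y t s (ev_skip u HP Vx)).
- destruct Hoe as [P V y v HP Hl Hv].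
  case: (boolP (V x)) => Vx; first case: (classic (inert u)) => Hu.
  + left; exists (plugt (pctx_app P x u) v). right.
    rewrite -plugt_app. apply: (oe_step (ev_inert HP Vx Hu)) => //.
    by rewrite plookup_app Hl.
  + left.
    have [y' [Q [W [Sy [Ny [HQ [D [Pd [Pl _]]]]]]]]] :=
      @RP_ctx _ _ HP (Var y) (fun z => z = x) (ex_intro _ x (conj erefl Vx)).
    subst y'. rewrite -Pl. exact: step_up HQ (D x erefl) Pd Hu.
  + left; exists (plugt (pctx_app P x u) v). right.
    rewrite -plugt_app. apply: (oe_step (ev_skip u HP Vx)) => //.
    by rewrite plookup_app Hl.
- case: (boolP (nvp p x)) => Nx; last by right; left; apply: ip_skip.
  case: (classic (inert u)) => Hu; first by right; left; apply: ip_inert.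
  left.
  have [y' [Q [W [Sy [Ny [HQ [D [Pd [Pl _]]]]]]]]] :=
    @RP_inertp _ Hi (fun z => z = x) (ex_intro _ x (conj erefl Nx)).
  subst y'. rewrite -Pl. exact: step_up HQ (D x erefl) Pd Hu.
- right; right; exact: ab_ext.
Qed.

Lemma progress p : (exists q, ond p q) \/ onorm p.
Proof.
case: p => t E. elim: E => [|[x u] E IH].
- case: (redex_or_fb t) => [F|[H [a [b [c [Hok ->]]]]]].
  + right. destruct F as [a b|i Hi].
    * right; constructor; by exists a, b.
    * left; by constructor.
  + left. exists (plug (PTm H [::]) (b, [:: (a, c)])). left.
    exact: (om_step a b c (ev_base Hok)).
- exact: (@step (t, E) x u IH).
Qed.

Theorem mainTheorem3 (p : program) :
  (~ exists q : program, ond p q) <-> onorm p.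
Proof.
split.
- move=> Hn. by case: (progress p).
- move=> Hon [q [Hom|Hoe]].
  + destruct Hom as [P V x t u HP]. case: Hon => [Hi|Ha].
    * have [F _] := @inert_ctx _ _ HP _ Hi. exact: (@fb_redex _ _ _ F).
    * have [a [b E]] := @absp_lam _ Ha. by apply: (@ctx_notlam _ _ HP (App (Lam x t) u) _ a b E).
  + destruct Hoe as [P V x v HP Hl Hv]. case: Hon => [Hi|Ha].
    * have [_ Hl'] := @inert_ctx _ _ HP _ Hi. have := Hl' x v erefl Hl.
      case: Hv => a [b ->]. move=> H; inversion H.
    * have [a [b E]] := @absp_lam _ Ha. by apply: (@ctx_notlam _ _ HP (Var x) _ a b E).
Qed.
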